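(* Let $P$ be a finite poset with height function $h$. Then the $q$-Zeta polynomial of $P$ with the shifted height function $h+1$ is $$\mathsf{Z}_{P,h+1}(x)=\frac{1}{q}\big(1+(q-1)x\big)\,\mathsf{Z}_{P,h}(x).$$
   Context: $q$ is an indeterminate; $[n]_q=(q^n-1)/(q-1)$. A height function on a finite poset $P$ is $h:P\to\mathbb{N}$ with $h(x)<h(y)$ whenever $y$ covers $x$. The $q$-Zeta polynomial $\mathsf{Z}_{P,h}\in\mathbb{Q}(q)[x]$ is the unique polynomial with $\mathsf{Z}_{P,h}([n]_q)=\sum_{e_1\le\cdots\le e_{n-1}\text{ in }P}q^{h(e_1)+\cdots+h(e_{n-1})}$ for all integers $n\ge2$ (such a polynomial exists). *)

(* Defs.v *)
From HB Require Import structures.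
From mathcomp Require Import all_boot all_order all_algebra.
From mathcomp Require Import fraction.
Set Implicit Arguments. Unset Strict Implicit. Unset Printing Implicit Defensive.
Import Order.TTheory GRing.Theory.
Local Open Scope ring_scope.

Definition Qq : fieldType := {fraction {poly rat}}.

Definition qv : Qq := tofrac ('X : {poly rat}).

Definition qint (n : nat) : Qq := (qv ^+ n - 1) / (qv - 1).

Definition covers (d : Order.disp_t) (P : finPOrderType d) (x y : P) : bool :=
  ((x < y)%O && [forall z : P, ~~ ((x < z)%O && (z < y)%O)]).

Definition height_fun (d : Order.disp_t) (P : finPOrderType d) (h : P -> nat) : Prop :=
  forall x y : P, covers x y -> (h x < h y)%N.

Definition multichain_sum (d : Order.disp_t) (P : finPOrderType d) (h : P -> nat)
    (n : nat) : Qq :=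
  \sum_(t : (n.-1).-tuple P | sorted (fun a b : P => (a <= b)%O) t)
     qv ^+ (\sum_(i < n.-1) h (tnth t i))%N.

(* Z is the q-Zeta polynomial of (P, h): Z([n]_q) = multichain_sum for all n >= 2.
   (It is unique, since the points [n]_q, n >= 2, are pairwise distinct.) *)
Definition is_qZeta (d : Order.disp_t) (P : finPOrderType d) (h : P -> nat)
    (Z : {poly Qq}) : Prop :=
  forall n : nat, (2 <= n)%N -> Z.[qint n] = multichain_sum h n.

(* Main.v *)
Require Import Defs.
From HB Require Import structures.
From mathcomp Require Import all_boot all_order all_algebra.
From mathcomp Require Import fraction.
Import Order.TTheory GRing.Theory.
Local Open Scope ring_scope.

Lemma qv_neq0 : qv != 0.
Proof. by rewrite /qv tofrac_eq0 polyX_eq0. Qed.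

Lemma qv1_neq0 : qv - 1 != 0.
Proof.
rewrite /qv -tofrac1 -tofracB tofrac_eq0 subr_eq0.
apply/eqP => /(congr1 (fun p : {poly rat} => size p)).
by rewrite size_polyX size_polyC oner_eq0.
Qed.

Lemma qvX_inj m n : qv ^+ m = qv ^+ n -> m = n.
Proof.
rewrite /qv -!tofracXn => /eqP; rewrite tofrac_eq => /eqP.
move/(congr1 (fun p : {poly rat} => size p)).
by rewrite !size_polyXn => -[].
Qed.

Lemma qint_inj m n : qint m = qint n -> m = n.
Proof.
rewrite /qint => /(congr1 (fun x => x * (qv - 1))).
rewrite !divfK ?qv1_neq0 // => /addIr; exact: qvX_inj.
Qed.

Lemma qint_lin n : 1 + (qv - 1) * qint n = qv ^+ n.
Proof. by rewrite /qint mulrC divfK ?qv1_neq0 // addrC subrK. Qed.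

Lemma msum_shift (d : Order.disp_t) (P : finPOrderType d) (h : P -> nat) n :
  multichain_sum (fun x => (h x).+1) n = qv ^+ n.-1 * multichain_sum h n.
Proof.
rewrite /multichain_sum mulr_sumr; apply: eq_bigr => t _.
have -> : (\sum_(i < n.-1) (h (tnth t i)).+1 = \sum_(i < n.-1) h (tnth t i) + n.-1)%N.
  have -> : (\sum_(i < n.-1) (h (tnth t i)).+1 = \sum_(i < n.-1) (h (tnth t i) + 1))%N.
    by apply: eq_bigr => i _; rewrite addn1.
  by rewrite big_split /= sum1_card card_ord.
by rewrite exprD mulrC.
Qed.

Theorem mainTheorem16 (d : Order.disp_t) (P : finPOrderType d) (h : P -> nat)
    (Zh Zh1 : {poly Qq}) :
  height_fun h ->
  is_qZeta h Zh ->
  is_qZeta (fun x => (h x).+1) Zh1 ->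
  Zh1 = qv^-1 *: ((1 + (qv - 1) *: 'X) * Zh).
Proof.
move=> _ HZ HZ1.
set R := qv^-1 *: _.
apply/eqP; rewrite -subr_eq0; apply/eqP.
set D := Zh1 - R.
apply: (@roots_geq_poly_eq0 _ D [seq qint (i.+2) | i <- iota 0 (size D)]).
- apply/allP => x /mapP [i _ ->].
  rewrite /root /D /R hornerD hornerN hornerZ hornerM hornerD hornerC hornerZ hornerX.
  rewrite HZ1 // HZ // msum_shift qint_lin (exprS qv i.+1) mulrA mulKf ?qv_neq0 //.
  by rewrite subrr.
- rewrite map_inj_uniq ?iota_uniq //.
  by move=> i j /qint_inj [].
- by rewrite size_map size_iota.
Qed.
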